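(* Let $T$ be a tournament whose strong components are $D_1,\ldots,D_k$, for some positive integer $k$, and let $\mathcal{X}\in\{g,P_3^*\}$. Then $$\overrightarrow{in}_{\mathcal{X}}(T)=\sum_{i=1}^k\overrightarrow{in}_{\mathcal{X}}(D_i)\quad\text{and}\quad \overrightarrow{hn}_{\mathcal{X}}(T)=\sum_{i=1}^k\overrightarrow{hn}_{\mathcal{X}}(D_i).$$ In particular, if $\ell\le k$ of the strong components are non-trivial (have more than one vertex), then $\overrightarrow{hn}_{P_3^*}(T)=\overrightarrow{hn}_{g}(T)=|\mathrm{Ext}(T)|+2\ell$.
   Context: A tournament is an orientation of a complete graph; its strong components are its maximal strongly connected subdigraphs (each $D_i$ is considered as the induced sub-tournament). For an oriented graph $D$: the geodetic interval function $I_g(u,v)$ is the set of vertices on some shortest directed $(u,v)$-path or some shortest directed $(v,u)$-path; the distance-two interval function $I_{P_3^*}(u,v)$ is $\{u,v\}$ together with all vertices $w$ with $(u,w),(w,v)\in A(D)$ and $(u,v)\notin A(D)$, or $(v,w),(w,u)\in A(D)$ and $(v,u)\notin A(D)$. For an interval function $I$ and $S\subseteq V(D)$, $I(S)=\bigcup_{u,v\in S}I(u,v)$; $C$ is convex if $I(C)=C$; the convex hull of $S$ is the smallest convex set containing $S$. An interval set is $S$ with $I(S)=V(D)$ and a hull set is $S$ with convex hull $V(D)$; $\overrightarrow{in}_{\mathcal{X}}(D)$ and $\overrightarrow{hn}_{\mathcal{X}}(D)$ are the minimum sizes of an interval set and of a hull set for $I_{\mathcal{X}}$. A vertex $v$ is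 transitive if whenever $(u,v),(v,w)\in A(D)$ we have $(u,w)\in A(D)$; $v$ is extreme if it is a source, a sink, or transitive; $\mathrm{Ext}(D)$ denotes the set of extreme vertices of $D$. *)

(* Defs.v *)
From Stdlib Require Import ClassicalEpsilon.
From mathcomp Require Import all_boot.

Set Implicit Arguments.
Unset Strict Implicit.
Unset Printing Implicit Defensive.

Definition pb (P : Prop) : bool :=
  if excluded_middle_informative P then true else false.

Section Digraphs.
Variable T : finType.
Variable a : rel T.   (* arc relation: a x y  <->  (x,y) is an arc *)

Definition tournament : Prop :=
  (forall x, ~~ a x x) /\ (forall x y, x != y -> a x y != a y x).

(* All digraph notions below are relative to the sub-digraph induced on V. *)

Definition walk (V : {set T}) (u : T) (p : seq T) : bool :=
  [&& u \in V, all (fun x => x \in V) p & path a u p].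

Definition on_shortest (V : {set T}) (u v w : T) : Prop :=
  exists p, [/\ walk V u p, last u p = v, w \in u :: p &
    forall q, walk V u q -> last u q = v -> size p <= size q].

Inductive ifun := Geo | P3s.

Definition Iv (X : ifun) (V : {set T}) (u v w : T) : Prop :=
  match X with
  | Geo => on_shortest V u v w \/ on_shortest V v u w
  | P3s => [/\ u \in V, v \in V & w \in V] /\
           (w = u \/ w = v \/
            (a u w /\ a w v /\ ~~ a u v) \/ (a v w /\ a w u /\ ~~ a v u))
  end.

Definition InI (X : ifun) (V S : {set T}) (w : T) : Prop :=
  exists u v, [/\ u \in S, v \in S & Iv X V u v w].

Definition interval_set (X : ifun) (V S : {set T}) : Prop :=
  S \subset V /\ forall w, InI X V S w <-> w \in V.

Definition convex (X : ifun) (V C : {set T}) : Prop :=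
  C \subset V /\ forall w, InI X V C w <-> w \in C.

Definition hull (X : ifun) (V S : {set T}) : {set T} :=
  [set w in V | pb (forall C : {set T}, S \subset C -> convex X V C -> w \in C)].

Definition hull_set (X : ifun) (V S : {set T}) : Prop :=
  S \subset V /\ hull X V S = V.

(* minimum sizes (V itself is always an interval set / hull set) *)
Definition in_num (X : ifun) (V : {set T}) : nat :=
  #|[arg min_(S < V | pb (interval_set X V S)) #|S|]|.

Definition hn_num (X : ifun) (V : {set T}) : nat :=
  #|[arg min_(S < V | pb (hull_set X V S)) #|S|]|.

Definition scomp (x : T) : {set T} := [set y | connect a x y && connect a y x].
Definition strong_components : {set {set T}} := [set scomp x | x in T].

Definition extreme (v : T) : bool :=
  [|| [forall u, ~~ a u v], [forall w, ~~ a v w] |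
      [forall u, forall w, a u v ==> a v w ==> a u w]].
Definition Ext : {set T} := [set v | extreme v].

End Digraphs.

(* Main.v *)
Require Import Defs.
From mathcomp Require Import all_boot.
From Stdlib Require Import ClassicalEpsilon.

Set Implicit Arguments.
Unset Strict Implicit.
Unset Printing Implicit Defensive.

Section Aux.
Variable T : finType.
Variable a : rel T.
Hypothesis tour : tournament a.

Lemma pbE (P : Prop) : pb P <-> P.
Proof. by rewrite /pb; case: excluded_middle_informative. Qed.

Lemma tirr x : ~~ a x x.
Proof. by case: tour. Qed.

Lemma tasym x y : a x y -> ~~ a y x.
Proof.
move=> h; case: (eqVneq x y) => [e|ne]; first by subst; rewrite (negbTE (tirr _)) in h.
by case: tour => _ /(_ _ _ ne); rewrite h; case: (a y x).
Qed.

Lemma ttot x y : x != y -> ~~ a x y -> a y x.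
Proof. by move=> ne; case: tour => _ /(_ _ _ ne); case: (a x y); case: (a y x). Qed.

Lemma tneq x y : a x y -> x != y.
Proof. by move=> h; apply/eqP=> e; subst; rewrite (negbTE (tirr y)) in h. Qed.

Lemma scompE x y : (y \in scomp a x) = connect a x y && connect a y x.
Proof. by rewrite inE. Qed.

Lemma scomp_self x : x \in scomp a x.
Proof. by rewrite scompE connect0. Qed.

Lemma scomp_eq x y : y \in scomp a x -> scomp a y = scomp a x.
Proof.
rewrite scompE => /andP[h1 h2]; apply/setP=> z; rewrite !scompE.
apply/andP/andP=> [[c1 c2]|[c1 c2]]; split.
- exact: connect_trans h1 c1.
- exact: connect_trans c2 h2.
- exact: connect_trans h2 c1.
- exact: connect_trans c2 h1.
Qed.

Lemma comp_of D w : D \in strong_components a -> w \in D -> D = scomp a w.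
Proof.
by case/imsetP=> x _ -> wD; rewrite (scomp_eq wD).
Qed.

Lemma comp_in x : scomp a x \in strong_components a.
Proof. by apply/imsetP; exists x. Qed.

Lemma comp_disj D D' x : D \in strong_components a -> D' \in strong_components a ->
  x \in D -> x \in D' -> D = D'.
Proof. by move=> hD hD' xD xD'; rewrite (comp_of hD xD) (comp_of hD' xD'). Qed.

Lemma closed_conn (K : pred T) u v :
  (forall z z', K z -> a z z' -> K z') -> K u -> connect a u v -> K v.
Proof.
move=> cl Ku /connectP[p pth ->]; elim: p u Ku pth => [|z p IH] u Ku //=.
case/andP=> auz pth; apply: (IH z) => //; exact: cl auz.
Qed.

Lemma path_last_conn u p y : path a u p -> y \in u :: p -> connect a y (last u p).
Proof.
elim: p u y => [|z p IH] u y /=; first by rewrite inE => _ /eqP ->; exact: connect0.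
case/andP=> auz pth; rewrite inE => /orP[/eqP ->|yin].
- exact: connect_trans (connect1 auz) (IH z z pth (mem_head _ _)).
- exact: IH z y pth yin.
Qed.

Lemma path_first_conn u p y : path a u p -> y \in u :: p -> connect a u y.
Proof. move=> pth yin; exact: path_connect pth y yin. Qed.


Lemma walk_mem (V : {set T}) u p y : walk a V u p -> y \in u :: p -> y \in V.
Proof.
case/and3P=> uV /allP pV _; rewrite inE => /orP[/eqP ->//|]; exact: pV.
Qed.

Lemma last_mem u (p : seq T) : last u p \in u :: p.
Proof. exact: mem_last. Qed.

Lemma Iv_in X (V : {set T}) u v w : Iv a X V u v w -> [/\ u \in V, v \in V & w \in V].
Proof.
case: X => /=.
- case=> [] [p [wk lst win _]].
  + split; [exact: walk_mem wk (mem_head _ _)| |exact: walk_mem wk win].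
    by rewrite -lst; apply: walk_mem wk (last_mem _ _).
  + split; [|exact: walk_mem wk (mem_head _ _)|exact: walk_mem wk win].
    by rewrite -lst; apply: walk_mem wk (last_mem _ _).
- by case.
Qed.

Lemma Iv_refl X (V : {set T}) u : u \in V -> Iv a X V u u u.
Proof.
move=> uV; case: X => /=.
- left; exists [::]; split => //; first by rewrite /walk uV.
  by rewrite mem_head.
- by split; [split|left].
Qed.

Lemma Iv_xx X (V : {set T}) x w : Iv a X V x x w -> w = x.
Proof.
case: X => /=.
- have H: on_shortest a V x x w -> w = x.
    case=> p [wk lst win min].
    have: size p <= 0.
      apply: (min [::]) => //; rewrite /walk /=; case/and3P: wk => -> _ _ //.
    case: p {wk lst min} win => [|z q] //= win _.
    by move: win; rewrite inE => /eqP.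
  by case; exact: H.
- move=> [_ [e|[e|[[h1 [h2 _]]|[h1 [h2 _]]]]]]; try exact: e;
  by rewrite (negbTE (tasym h1)) in h2.
Qed.

Lemma walkT u p : walk a [set: T] u p = path a u p.
Proof.
rewrite /walk in_setT /=.
by have ->: all (fun x => x \in [set: T]) p by apply/allP=> z _; rewrite in_setT.
Qed.

Lemma walk_comp u p : path a u p -> connect a (last u p) u -> walk a (scomp a u) u p.
Proof.
move=> pth cl; rewrite /walk scomp_self pth andbT.
apply/allP=> y yp; have yin : y \in u :: p by rewrite inE yp orbT.
rewrite scompE (path_first_conn pth yin) /=.
exact: connect_trans (path_last_conn pth yin) cl.
Qed.

Lemma walk_sub (V V' : {set T}) u p : V \subset V' -> walk a V u p -> walk a V' u p.
Proof.
move=> /subsetP sVV' /and3P[uV /allP pV pth]; rewrite /walk sVV' //= pth andbT.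
apply/allP=> y yp; exact: sVV' (pV y yp).
Qed.

Lemma os_T_comp u v w : on_shortest a [set: T] u v w -> connect a v u ->
  on_shortest a (scomp a u) u v w.
Proof.
case=> p [wk lst win min] cvu; exists p; split => //.
- rewrite walkT in wk; apply: walk_comp => //; by rewrite lst.
- move=> q wq lq; apply: min => //; apply: walk_sub wq; exact: subsetT.
Qed.

Lemma os_T_other u v w : on_shortest a [set: T] u v w -> ~~ connect a v u ->
  w = u \/ w = v.
Proof.
case=> p [wk lst win min] ncvu.
have nuv : u != v by apply: contraNneq ncvu => ->; exact: connect0.
have auv : a u v.
  apply: (ttot (y:=u)); first by rewrite eq_sym.
  by apply: contra ncvu => h; exact: connect1.
have : size p <= 1 by apply: (min [:: v]) => //=; rewrite walkT /= auv.
case: p {wk min} lst win => [/= e|z [|//] /= ->]; first by rewrite e eqxx in nuv.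
by rewrite !inE => /orP[/eqP|/eqP]; auto.
Qed.

Lemma os_comp_T x u v w : u \in scomp a x -> on_shortest a (scomp a x) u v w ->
  on_shortest a [set: T] u v w.
Proof.
move=> ux; case=> p [wk lst win min]; exists p; split => //.
- apply: walk_sub wk; exact: subsetT.
- move=> q wq lq; apply: min => //.
  have vx : v \in scomp a x by rewrite -lst; exact: walk_mem wk (last_mem _ _).
  rewrite -(scomp_eq ux); apply: walk_comp; first by rewrite -walkT.
  rewrite lq; move: vx; rewrite -(scomp_eq ux) scompE => /andP[_ ->] //.
Qed.

Lemma Iv_T_comp X u v w : Iv a X [set: T] u v w ->
  Iv a X (scomp a u) u v w \/ w = u \/ w = v.
Proof.
case: X => /=.
- case=> [os|os].
  + case: (boolP (connect a v u)) => cvu.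
    * by left; left; exact: os_T_comp.
    * by right; exact: os_T_other os cvu.
  + case: (boolP (connect a u v)) => cuv.
    * have vu : v \in scomp a u.
        case: os => p [wk lst _ _]; rewrite scompE cuv /=.
        rewrite -lst; rewrite walkT in wk; exact: path_last_conn wk (mem_head _ _).
      by left; right; rewrite -(scomp_eq vu); exact: os_T_comp.
    * by right; case: (os_T_other os cuv); auto.
- move=> [_ [e|[e|[[h1 [h2 h3]]|[h1 [h2 h3]]]]]]; auto; left.
  + have avu : a v u by apply: ttot h3; apply: contraNneq (tasym h1) => ->.
    split; last by right; right; left.
    by rewrite !scompE connect0 (connect1 avu) (connect1 h1)
      (connect_trans (connect1 h1) (connect1 h2)) (connect_trans (connect1 h2) (connect1 avu)).
  + have auv : a u v by apply: ttot h3; apply: contraNneq (tasym h1) => ->.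
    split; last by right; right; right.
    by rewrite !scompE connect0 (connect1 auv) (connect1 h2)
      (connect_trans (connect1 auv) (connect1 h1)) (connect_trans (connect1 h1) (connect1 h2)).
Qed.

Lemma Iv_comp_T X x u v w : Iv a X (scomp a x) u v w -> Iv a X [set: T] u v w.
Proof.
move=> h; have [ux vx _] := Iv_in h; move: h.
case: X => /=.
- case=> os; [left|right]; apply: os_comp_T os => //.
- by case=> _ H; split; first by split; rewrite in_setT.
Qed.


Notation comps := (strong_components a).

Lemma InI_T X S w : InI a X [set: T] S w <-> InI a X (scomp a w) (S :&: scomp a w) w.
Proof.
split.
- case=> u [v [uS vS h]]; case: (Iv_T_comp h) => [h'|[e|e]].
  + have [uc vc wc] := Iv_in h'; rewrite -(scomp_eq wc) in h' uc vc.
    by exists u, v; split => //; rewrite inE ?uS ?vS.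
  + exists w, w; split; try (by rewrite inE e uS scomp_self).
    exact: Iv_refl (scomp_self w).
  + exists w, w; split; try (by rewrite inE e vS scomp_self).
    exact: Iv_refl (scomp_self w).
- case=> u [v [uS vS h]]; exists u, v; move: uS vS; rewrite !inE => /andP[uS _] /andP[vS _].
  split => //; exact: Iv_comp_T h.
Qed.

Lemma InI_in X (V S : {set T}) w : InI a X V S w -> w \in V.
Proof. by case=> u [v [_ _ h]]; case: (Iv_in h). Qed.

Lemma InI_refl X (V S : {set T}) w : S \subset V -> w \in S -> InI a X V S w.
Proof. move=> /subsetP sSV wS; exists w, w; split => //; exact: Iv_refl (sSV _ wS). Qed.

Lemma interval_dec X S : interval_set a X [set: T] S <->
  forall D, D \in comps -> interval_set a X D (S :&: D).
Proof.
split.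
- case=> _ H D hD; split; first exact: subsetIr.
  move=> w; split; first exact: InI_in.
  move=> wD; rewrite (comp_of hD wD); apply/InI_T; apply/H; exact: in_setT.
- move=> H; split; first exact: subsetT.
  move=> w; split => [_|_]; first exact: in_setT.
  apply/InI_T; have [_ /(_ w) ->] := H _ (comp_in w); exact: scomp_self.
Qed.

Lemma convex_dec X C : convex a X [set: T] C <->
  forall D, D \in comps -> convex a X D (C :&: D).
Proof.
split.
- case=> _ H D hD; split; first exact: subsetIr.
  move=> w; split.
  + move=> h; have wD := InI_in h; rewrite (comp_of hD wD) in h *.
    by rewrite inE scomp_self andbT; apply/H; apply/InI_T.
  + apply: InI_refl; exact: subsetIr.
- move=> H; split; first exact: subsetT.
  move=> w; split.
  + move/InI_T; have [_ /(_ w) ->] := H _ (comp_in w); by rewrite inE => /andP[].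
  + apply: InI_refl; exact: subsetT.
Qed.

Lemma convex_full X (V : {set T}) : convex a X V V.
Proof.
split => // w; split; [exact: InI_in | apply: InI_refl; exact: subxx].
Qed.

Lemma hullsetE X (V S : {set T}) : hull_set a X V S <->
  S \subset V /\ forall C : {set T}, S \subset C -> convex a X V C -> V \subset C.
Proof.
split.
- case=> sSV hE; split => // C sSC cC; apply/subsetP=> w wV.
  move: wV; rewrite -{1}hE inE => /andP[_ /pbE]; exact.
- case=> sSV H; split => //; apply/setP=> w; rewrite inE.
  case wV: (w \in V) => //=; apply/pbE => C sSC cC.
  exact: (subsetP (H C sSC cC)).
Qed.

Lemma hull_dec X S : hull_set a X [set: T] S <->
  forall D, D \in comps -> hull_set a X D (S :&: D).
Proof.
split.
- move/hullsetE=> [_ H] D hD; apply/hullsetE; split; first exact: subsetIr.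
  move=> C' sSC' cC'.
  have sC'D : C' \subset D by case: cC'.
  have cC : convex a X [set: T] (C' :|: ~: D).
    apply/convex_dec => D' hD'.
    case: (eqVneq D' D) => [->|ne].
    * have ->: (C' :|: ~: D) :&: D = C'; last by [].
      apply/setP=> z; rewrite !inE; case zD: (z \in D); rewrite ?andbT ?andbF ?orbF //.
      by symmetry; apply/negbTE; apply: contraFN zD; exact: (subsetP sC'D).
    * have ->: (C' :|: ~: D) :&: D' = D'; last exact: convex_full.
      apply/setP=> z; rewrite !inE; case zD': (z \in D'); rewrite ?andbT ?andbF //.
      case zD: (z \in D); rewrite ?orbT //.
      by rewrite (comp_disj hD hD' zD zD') eqxx in ne.
  have sSC : S \subset C' :|: ~: D.
    apply/subsetP=> z zS; rewrite !inE; case zD: (z \in D); rewrite ?orbT //=.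
    by rewrite orbF; apply: (subsetP sSC'); rewrite inE zS zD.
  have := H _ sSC cC; move=> /subsetP sub; apply/subsetP => z zD.
  by have := sub z (in_setT z); rewrite !inE zD orbF.
- move=> H; apply/hullsetE; split; first exact: subsetT.
  move=> C sSC /convex_dec cC; apply/subsetP=> w _.
  have /hullsetE [_ H'] := H _ (comp_in w).
  have := H' (C :&: scomp a w) (setSI _ sSC) (cC _ (comp_in w)).
  by move=> /subsetP /(_ w (scomp_self w)); rewrite inE => /andP[].
Qed.


Lemma card_comps (S : {set T}) : #|S| = \sum_(D in comps) #|S :&: D|.
Proof.
rewrite -sum1_card (partition_big (scomp a) (fun D => D \in comps)); last first.
  by move=> i _; exact: comp_in.
apply: eq_bigr => D hD; rewrite -sum1_card; apply: eq_bigl => x; rewrite inE.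
congr andb; apply/eqP/idP => [<-|xD]; first exact: scomp_self.
by rewrite -(comp_of hD xD).
Qed.

Definition am (Q : {set T} -> {set T} -> Prop) (V : {set T}) :=
  [arg min_(S < V | pb (Q V S)) #|S|].

Lemma am_spec Q V : Q V V -> Q V (am Q V) /\ forall S, Q V S -> #|am Q V| <= #|S|.
Proof.
move=> hV; rewrite /am; case: arg_minnP => [|S hS min]; first exact/pbE.
split; first exact/pbE.
move=> S' h; apply: min; exact/pbE.
Qed.

Lemma mn_sum Q : (forall V, Q V V) ->
  (forall S, Q [set: T] S <-> forall D, D \in comps -> Q D (S :&: D)) ->
  (forall D S, D \in comps -> Q D S -> S \subset D) ->
  #|am Q [set: T]| = \sum_(D in comps) #|am Q D|.
Proof.
move=> hVV hdec hsub; apply/eqP; rewrite eqn_leq; apply/andP; split.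
- pose U := \bigcup_(D in comps) am Q D.
  have UD : forall D, D \in comps -> U :&: D = am Q D.
    move=> D hD; have sD := hsub _ _ hD (am_spec (hVV D)).1.
    apply/setP=> z; rewrite inE; apply/andP/idP.
    + case=> /bigcupP[D' hD' zD'] zD.
      have sD' := hsub _ _ hD' (am_spec (hVV D')).1.
      by rewrite (comp_disj hD hD' zD (subsetP sD' _ zD')).
    + move=> zD; split; [apply/bigcupP; exists D => // | exact: (subsetP sD)].
  have QU : Q [set: T] U.
    apply/hdec => D hD; rewrite UD //; exact: (am_spec (hVV D)).1.
  apply: leq_trans ((am_spec (hVV _)).2 _ QU) _.
  rewrite card_comps; apply: eq_leq; apply: eq_bigr => D hD; by rewrite UD.
- have [hS _] := am_spec (hVV [set: T]).
  rewrite [X in _ <= X]card_comps; apply: leq_sum => D hD.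
  apply: (am_spec (hVV D)).2; exact: (proj1 (hdec _) hS D hD).
Qed.


Lemma cut_comp x (P : {set T}) p0 q0 : P \subset scomp a x -> p0 \in P ->
  q0 \in scomp a x -> q0 \notin P ->
  exists q p, [/\ q \in scomp a x, q \notin P, p \in P & a q p].
Proof.
move=> sP p0P q0D q0P.
case: (boolP [exists q, exists p, [&& q \in scomp a x, q \notin P, p \in P & a q p]]).
  by case/existsP=> q /existsP[p /and4P[h1 h2 h3 h4]]; exists q, p.
move=> /negP nex; exfalso.
pose K := fun y => connect a q0 y && (y \notin P).
have cl : forall z z', K z -> a z z' -> K z'.
  move=> z z' /andP[c0z zP] azz'; rewrite /K (connect_trans c0z (connect1 azz')) /=.
  apply/negP=> z'P; apply: nex; apply/existsP; exists z; apply/existsP; exists z'.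
  rewrite zP z'P azz' /= andbT scompE.
  have := subsetP sP _ z'P; rewrite scompE => /andP[_ cz'x].
  move: q0D; rewrite scompE => /andP[cxq0 _].
  by rewrite (connect_trans cxq0 c0z) (connect_trans (connect1 azz') cz'x).
have Kq0 : K q0 by rewrite /K connect0.
have cq0p0 : connect a q0 p0.
  move: q0D (subsetP sP _ p0P); rewrite !scompE => /andP[_ c1] /andP[c2 _].
  exact: connect_trans c1 c2.
have := closed_conn cl Kq0 cq0p0; by rewrite /K p0P andbF.
Qed.

Definition strongS (S : {set T}) := forall P : {set T}, P \subset S ->
  (exists p, p \in P) -> (exists q, q \in S /\ q \notin P) ->
  exists q p, [/\ q \in S, q \notin P, p \in P & a q p].

Lemma strong1 x : strongS [set x].
Proof.
move=> P sP [p pP] [q [qx qP]]; exfalso.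
move: (subsetP sP _ pP) qx; rewrite !inE => /eqP e1 /eqP e2; subst.
by rewrite pP in qP.
Qed.

Lemma split_cases (S P : {set T}) :
  [exists s in S, s \in P] && [exists s in S, s \notin P] \/
  (forall s, s \in S -> s \notin P) \/ (forall s, s \in S -> s \in P).
Proof.
case: (boolP [exists s in S, s \in P]) => h1; case: (boolP [exists s in S, s \notin P]) => h2; auto.
- right; right=> s sS; apply: contraT => sP; rewrite -(negbTE h2).
  by apply/existsP; exists s; rewrite sS.
- right; left=> s sS; apply/negP => sP; apply: (negP h1).
  by apply/existsP; exists s; rewrite sS.
- right; left=> s sS; apply/negP => sP; apply: (negP h1).
  by apply/existsP; exists s; rewrite sS.
Qed.

Lemma strong_split (S P : {set T}) : strongS S -> [exists s in S, s \in P] ->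
  [exists s in S, s \notin P] ->
  exists q p, [/\ q \in S, q \notin P, p \in P & a q p].
Proof.
move=> sS /existsP[p /andP[pS pP]] /existsP[q /andP[qS qP]].
have e1 : exists p, p \in P :&: S by exists p; rewrite inE pP pS.
have e2 : exists q, q \in S /\ q \notin P :&: S by exists q; rewrite inE (negbTE qP).
have [q' [p' [q'S q'P p'P aqp]]] := sS (P :&: S) (subsetIr _ _) e1 e2.
exists q', p'; split => //.
- by move: q'P; rewrite inE q'S andbT.
- by move: p'P; rewrite inE => /andP[].
Qed.

Lemma add1 (S : {set T}) x s1 s2 : strongS S -> s1 \in S -> s2 \in S -> a s1 x -> a x s2 ->
  strongS (x |: S).
Proof.
move=> sS s1S s2S a1 a2 P sP [p pP] [q [qS qP]].
case: (split_cases S P) => [/andP[h1 h2]|[h|h]].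
- have [q' [p' [q'S q'P p'P aqp]]] := strong_split sS h1 h2.
  by exists q', p'; rewrite inE q'S orbT.
- have px : p = x.
    case/setU1P: (subsetP sP _ pP) => [//|pS].
    by rewrite (negbTE (h _ pS)) in pP.
  exists s1, p; split => //; [by rewrite inE s1S orbT|exact: h|by rewrite px].
- have qx : q = x.
    case/setU1P: qS => [//|qS].
    by rewrite h in qP.
  exists q, s2; split => //; [exact: h|by rewrite qx].
Qed.

Lemma add2 (S : {set T}) p q s0 : strongS S -> s0 \in S -> (forall s, s \in S -> a p s) ->
  (forall s, s \in S -> a s q) -> a q p -> strongS (p |: (q |: S)).
Proof.
move=> sS s0S hp hq aqp P sP [z zP] [y [yS yP]].
case: (split_cases S P) => [/andP[h1 h2]|[h|h]].
- have [q' [p' [q'S q'P p'P aqp']]] := strong_split sS h1 h2.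
  by exists q', p'; rewrite !inE q'S !orbT.
- case: (boolP (q \in P)) => qP.
  + exists s0, q; split => //; [by rewrite !inE s0S !orbT|exact: h|exact: hq].
  + have zp : z = p.
      move: (subsetP sP _ zP); rewrite !inE => /orP[/eqP //|/orP[/eqP e|zS]].
      * by subst; rewrite zP in qP.
      * by rewrite (negbTE (h _ zS)) in zP.
    exists q, z; split => //; [by rewrite !inE eqxx orbT|by rewrite zp].
- case: (boolP (p \in P)) => pP.
  + have yq : y = q.
      move: yS; rewrite !inE => /orP[/eqP e|/orP[/eqP //|yS]].
      * by subst; rewrite pP in yP.
      * by rewrite h in yP.
    exists y, p; split => //; by rewrite yq.
  + exists p, s0; split => //; [by rewrite !inE eqxx|exact: h|exact: hp].
Qed.


Definition gen x u v (S : {set T}) := forall C : {set T},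
  convex a P3s (scomp a x) C -> u \in C -> v \in C -> S \subset C.

Lemma conv_mem X (V C : {set T}) p q w : convex a X V C -> p \in C -> q \in C ->
  Iv a X V p q w -> w \in C.
Proof. by case=> _ H pC qC h; apply/H; exists p, q. Qed.

Lemma card_lt (D S : {set T}) x : x \in D -> x \notin S -> #|D :\: (x |: S)| < #|D :\: S|.
Proof.
move=> xD xS; apply: proper_card; apply/properP; split.
- by apply/subsetP=> z; rewrite !inE negb_or => /andP[/andP[_ ->] ->].
- by exists x; rewrite !inE ?xD ?xS ?eqxx.
Qed.

Lemma grow x n : forall (S : {set T}) u v, #|scomp a x :\: S| <= n ->
  S \subset scomp a x -> (exists s, s \in S) -> strongS S ->
  u \in scomp a x -> v \in scomp a x -> gen x u v S ->
  exists u' v', [/\ u' \in scomp a x, v' \in scomp a x & gen x u' v' (scomp a x)].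
Proof.
elim: n => [|n IH] S u v hn sSD [s0 s0S] stS uD vD gS.
- exists u, v; split => // C cC uC vC; apply/subsetP=> z zD.
  apply: (subsetP (gS C cC uC vC)); apply: contraT => zS.
  move: hn; rewrite leqn0 cards_eq0 => /eqP e.
  by have := in_set0 z; rewrite -e inE zS zD.
- case: (boolP (scomp a x \subset S)) => [sDS|].
    exists u, v; split => // C cC uC vC; exact: subset_trans sDS (gS C cC uC vC).
  case/subsetPn=> y yD yS.
  case: (boolP [exists z, [&& z \in scomp a x, z \notin S &
      [exists p, exists q, [&& p \in S, q \in S, a p z & a z q]]]]).
  + case/existsP=> z /and3P[zD zS /existsP[p /existsP[q /and4P[pS qS apz azq]]]].
    pose P := [set s in S | a s z].
    have e1 : exists p, p \in P by exists p; rewrite inE pS apz.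
    have e2 : exists q, q \in S /\ q \notin P by exists q; rewrite inE qS (negbTE (tasym azq)).
    have sPS : P \subset S by apply/subsetP=> w; rewrite inE => /andP[].
    have [q' [p' [q'S q'P p'P aqp]]] := stS P sPS e1 e2.
    move: p'P q'P; rewrite !inE q'S => /andP[p'S ap'z] /= nq'z.
    have azq' : a z q'.
      apply: ttot nq'z; apply: contraNneq zS => <-; exact: q'S.
    apply: (IH (z |: S) u v) => //.
    * by rewrite -ltnS; apply: leq_trans (card_lt zD zS) hn.
    * by apply/subsetP=> w; case/setU1P=> [->//|wS]; exact: (subsetP sSD).
    * by exists s0; rewrite inE s0S orbT.
    * exact: add1 stS p'S q'S ap'z azq'.
    * move=> C cC uC vC; have sSC := gS C cC uC vC.
      apply/subsetP=> w; case/setU1P=> [->|wS]; last exact: (subsetP sSC).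
      apply: (conv_mem cC (subsetP sSC _ p'S) (subsetP sSC _ q'S)).
      split; first by split => //; exact: (subsetP sSD).
      by right; right; left; split => //; split => //; exact: tasym.
  + move=> /negP nex.
    have noz : forall z p q, z \in scomp a x -> z \notin S -> p \in S -> q \in S ->
        a p z -> a z q -> False.
      move=> z p q zD zS pS qS apz azq; apply: nex; apply/existsP; exists z.
      rewrite zD zS /=; apply/existsP; exists p; apply/existsP; exists q.
      by rewrite pS qS apz azq.
    pose A := [set z in scomp a x | (z \notin S) && [forall s in S, a z s]].
    have [q [p [qD qS pS aqp]]] := cut_comp sSD s0S yD yS.
    have qA : q \in A.
      rewrite inE qD qS /=; apply/forallP=> s; apply/implyP=> sS.
      apply: contraT => nqs; have asq : a s q.
        apply: ttot nqs; apply: contraNneq qS => ->; exact: sS.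
      by exfalso; exact: noz qD qS sS pS asq aqp.
    have sAD : A \subset scomp a x by apply/subsetP=> z; rewrite inE => /andP[].
    have s0A : s0 \notin A by rewrite inE s0S /= andbF.
    have [b [a' [bD bA a'A aba']]] := cut_comp sAD qA (subsetP sSD _ s0S) s0A.
    move: a'A; rewrite inE => /and3P[a'D a'S /forallP ha'].
    have ha : forall s, s \in S -> a a' s by move=> s sS; exact: (implyP (ha' s)).
    have bS : b \notin S.
      apply/negP=> bS; by rewrite (negbTE (tasym (ha _ bS))) in aba'.
    have hb : forall s, s \in S -> a s b.
      move=> s sS; apply: contraT => nsb.
      have abs : a b s by apply: ttot nsb; apply: contraNneq bS => <-; exact: sS.
      move: bA; rewrite inE bD bS /= => /forallPn[s1].
      rewrite negb_imply => /andP[s1S nbs1].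
      have as1b : a s1 b by apply: ttot nbs1; apply: contraNneq bS => ->; exact: s1S.
      by exfalso; exact: noz bD bS s1S sS as1b abs.
    apply: (IH (a' |: (b |: S)) a' b) => //.
    * rewrite -ltnS; apply: leq_trans _ hn; apply: proper_card; apply/properP; split.
        by apply/subsetP=> z; rewrite !inE !negb_or => /andP[/and3P[_ _ ->] ->].
      by exists a'; [rewrite in_setD a'S a'D | rewrite in_setD in_setU1 eqxx].
    * apply/subsetP=> w; case/setU1P=> [->//|]; case/setU1P=> [->//|wS]; exact: (subsetP sSD).
    * by exists s0; rewrite !inE s0S !orbT.
    * exact: add2 stS s0S ha hb aba'.
    * move=> C cC a'C bC; apply/subsetP=> w; case/setU1P=> [->//|]; case/setU1P=> [->//|wS].
      apply: (conv_mem cC a'C bC); split; first by split => //; exact: (subsetP sSD).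
      by right; right; left; split; [exact: ha|split; [exact: hb|exact: tasym]].
Qed.


Lemma os2 (V : {set T}) u v w : u \in V -> v \in V -> w \in V ->
  a u w -> a w v -> ~~ a u v -> on_shortest a V u v w.
Proof.
move=> uV vV wV auw awv nuv; exists [:: w; v]; split => //.
- by rewrite /walk /= uV wV vV auw awv.
- by rewrite !inE eqxx orbT.
- case=> [|z [|z' q]] //= wq lq.
  + by subst; rewrite (negbTE (tasym auw)) in awv.
  + by subst; move: wq; rewrite /walk /= (negbTE nuv) !andbF.
Qed.

Lemma InI_P3_Geo (V C : {set T}) w : InI a P3s V C w -> InI a Geo V C w.
Proof.
case=> u [v [uC vC [[uV vV wV] h]]].
case: h => [e|[e|[[h1 [h2 h3]]|[h1 [h2 h3]]]]].
- by exists u, u; split => //; rewrite e; exact: Iv_refl.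
- by exists v, v; split => //; rewrite e; exact: Iv_refl.
- by exists u, v; split => //; left; exact: os2.
- by exists u, v; split => //; right; exact: os2.
Qed.

Lemma conv_geo (V C : {set T}) : convex a Geo V C -> convex a P3s V C.
Proof.
case=> sCV H; split => // w; split.
- by move/InI_P3_Geo/H.
- exact: InI_refl.
Qed.

Lemma hull_pair X x : exists u v, [/\ u \in scomp a x, v \in scomp a x &
  hull_set a X (scomp a x) [set u; v]].
Proof.
have h1 : [set x] \subset scomp a x.
  by apply/subsetP=> z; rewrite inE => /eqP ->; exact: scomp_self.
have h2 : gen x x x [set x].
  by move=> C _ xC _; apply/subsetP=> z; rewrite inE => /eqP ->.
have [u [v [uD vD gD]]] := @grow x #|scomp a x| [set x] x x (subset_leq_card (subsetDl _ _)) h1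
  (ex_intro _ x (set11 x)) (@strong1 x) (@scomp_self x) (@scomp_self x) h2.
exists u, v; split => //; apply/hullsetE; split.
  by apply/subsetP=> z; rewrite in_set2 => /orP[] /eqP ->.
move=> C sC cC; have uC : u \in C by apply: (subsetP sC); rewrite !inE eqxx.
have vC : v \in C by apply: (subsetP sC); rewrite !inE eqxx orbT.
case: X cC => cC; first exact: gD (conv_geo cC) uC vC.
exact: gD cC uC vC.
Qed.


Lemma hull_small X (V S : {set T}) : hull_set a X V S -> #|S| <= 1 -> V \subset S.
Proof.
move=> /hullsetE [sSV H] /card_le1_eqP le1; apply: H => //; split => // w; split.
- case=> u [v [uS vS h]]; have e := le1 u v uS vS; subst v.
  by rewrite (Iv_xx h).
- exact: InI_refl.
Qed.

Lemma hullVV X (V : {set T}) : hull_set a X V V.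
Proof. by apply/hullsetE; split => // C sVC _. Qed.

Lemma intVV X (V : {set T}) : interval_set a X V V.
Proof. by split => //; case: (convex_full X V). Qed.

Lemma hn_val X D : D \in comps ->
  #|am (hull_set a X) D| = if 1 < #|D| then 2 else 1.
Proof.
case/imsetP=> x _ ->.
have [hm min] := am_spec (@hullVV X (scomp a x)).
set m := am _ _ in hm min *.
case: ifP => h.
- apply/eqP; rewrite eqn_leq; apply/andP; split.
  + have [u [v [_ _ hp]]] := hull_pair X x.
    apply: leq_trans (min _ hp) _; rewrite cards2; by case: (u != v).
  + rewrite ltnNge; apply/negP => le1.
    have := subset_leq_card (hull_small hm le1).
    by move=> /leq_trans /(_ le1); rewrite leqNgt h.
- apply/eqP; rewrite eqn_leq; apply/andP; split.
  + apply: leq_trans (min _ (hullVV X _)) _; by rewrite leqNgt h.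
  + rewrite lt0n; apply/negP => /eqP m0.
    have le1 : #|m| <= 1 by rewrite m0.
    have := subsetP (hull_small hm le1) _ (@scomp_self x).
    by move/eqP: m0; rewrite cards_eq0 => /eqP ->; rewrite inE.
Qed.


Lemma extreme_triv x : extreme a x = (#|scomp a x| <= 1).
Proof.
apply/idP/idP.
- move=> ex; apply/card_le1_eqP => y z yD zD.
  suff H : forall y, y \in scomp a x -> y = x by rewrite (H y yD) (H z zD).
  move=> {y z yD zD} y; rewrite scompE => /andP[cxy cyx].
  apply/eqP; apply: contraT => nyx; exfalso.
  case/or3P: ex.
  + move/forallP=> src.
    have cl : forall z z', z != x -> a z z' -> z' != x.
      by move=> z z' _ azz'; apply: contraTneq (src z) => <-; rewrite negbK.
    by have := closed_conn cl nyx cyx; rewrite eqxx.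
  + move/forallP=> snk.
    have cl : forall z z', z == x -> a z z' -> z' == x.
      by move=> z z' /eqP -> axz'; move: (snk z'); rewrite axz'.
    by have := closed_conn cl (eqxx x) cxy; rewrite (negbTE nyx).
  + move/forallP=> tr.
    have cl : forall z z', a x z -> a z z' -> a x z'.
      move=> z z' axz azz'; apply: contraT => nxz'.
      have nz'x : x != z'.
        by apply: contraNneq (tasym axz) => ->.
      have az'x := ttot nz'x nxz'.
      have := implyP (implyP (forallP (tr z') z) az'x) axz.
      by rewrite (negbTE (tasym azz')).
    case/connectP: cxy => p pth lst; case: p pth lst => [/= _ e|z p /= /andP[axz pth] lst].
      by rewrite e eqxx in nyx.
    have cz : connect a z y by apply/connectP; exists p.
    have := closed_conn cl axz (connect_trans cz cyx).
    by rewrite (negbTE (tirr x)).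
- move=> le1; apply/or3P; apply: Or33; apply/forallP=> u; apply/forallP=> w.
  apply/implyP=> aux; apply/implyP=> axw; apply: contraT => nuw.
  have nuw' : u != w.
    apply: contraNneq (tasym aux) => ->; exact: axw.
  have awu := ttot nuw' nuw.
  have wD : w \in scomp a x.
    by rewrite scompE (connect1 axw) (connect_trans (connect1 awu) (connect1 aux)).
  have := card_le1_eqP le1 w x wD (@scomp_self x) => e; subst w.
  by rewrite (negbTE (tirr x)) in axw.
Qed.

Lemma card_Ext : #|Ext a| = \sum_(D in comps) (#|D| <= 1).
Proof.
rewrite card_comps; apply: eq_bigr => D hD.
case/imsetP: hD => x _ ->.
case: (boolP (#|scomp a x| <= 1)) => h.
- have -> : Ext a :&: scomp a x = scomp a x.
    apply/setP=> z; rewrite inE; case zD: (z \in scomp a x); rewrite ?andbF ?andbT //.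
    by rewrite inE extreme_triv (scomp_eq zD).
  apply/eqP; rewrite eqn_leq h /= card_gt0; apply/set0Pn; exists x; exact: scomp_self.
- apply/eqP; rewrite cards_eq0; apply/eqP/setP=> z; rewrite in_setI in_set0.
  case zD: (z \in scomp a x); rewrite ?andbF ?andbT //.
  by rewrite inE extreme_triv (scomp_eq zD) (negbTE h).
Qed.

End Aux.

Theorem proposition6 (T : finType) (a : rel T) :
  tournament a -> 0 < #|T| ->
  (forall X : ifun,
     in_num a X [set: T] = \sum_(D in strong_components a) in_num a X D /\
     hn_num a X [set: T] = \sum_(D in strong_components a) hn_num a X D) /\
  (forall l : nat,
     l = #|[set D in strong_components a | 1 < #|D|]| ->
     hn_num a P3s [set: T] = #|Ext a| + 2 * l /\
     hn_num a Geo [set: T] = #|Ext a| + 2 * l).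
Proof.
move=> tour _.
have hsum : forall X, hn_num a X [set: T] = \sum_(D in strong_components a) hn_num a X D.
  move=> X; apply: (@mn_sum T a (hull_set a X)).
  - exact: hullVV.
  - exact: hull_dec tour X.
  - by move=> D S _ [].
have hval : forall X, hn_num a X [set: T] = #|Ext a| + 2 * #|[set D in strong_components a | 1 < #|D|]|.
  move=> X; rewrite hsum (card_Ext tour).
  have -> : #|[set D in strong_components a | 1 < #|D|]| =
            \sum_(D in strong_components a) (1 < #|D|).
    rewrite -sum1_card big_mkcond /= [RHS]big_mkcond /=; apply: eq_bigr => D _.
    by rewrite inE; case: (D \in _); case: (1 < #|D|).
  rewrite mul2n -addnn -!big_split /=; apply: eq_bigr => D hD.
  rewrite /hn_num -/(am (hull_set a X) D) (hn_val tour X hD).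
  by case: (1 < #|D|) (leqNgt #|D| 1) => ->.
split.
- move=> X; split; last exact: hsum.
  apply: (@mn_sum T a (interval_set a X)).
  + exact: intVV.
  + exact: interval_dec tour X.
  + by move=> D S _ [].
- by move=> l ->; rewrite !hval.
Qed.
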